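(* Let $n \geq 2$ be an integer, let $p(x) \in \mathcal{T}_n$, and let $r = \deg \mathrm{Min}(p,x)$, where $1 \leq r \leq n$. Let $q(x) \in \mathcal{J}(p(x))$ and let $f(x) = q(x)/\gcd(p(x),p'(x)) \in \mathbb{Z}[x]$. Then there exist nonnegative real numbers $\gamma_1, \dots, \gamma_r$ such that \[ \mathrm{coeff}(f(x-1)) = \sum_{j=1}^r \gamma_j \cdot \mathrm{coeff}(\mathrm{Min}_j(p, x-1)). \]
   Context: A nonzero real polynomial is real-rooted if all its complex roots are real. For $n\ge1$, a Seidel trace polynomial of degree $n$ is a real-rooted polynomial $p(x)=\sum_{i=0}^n a_i x^{n-i}\in\mathbb{Z}[x]$ of degree $n$ with $a_0=1$, $a_1=0$, and $a_2=-\binom{n}{2}$ if $n\ge2$; $\mathcal{T}_n$ is the set of these. For real-rooted $p,q$ with $\deg p = m$, $\deg q = m-1$, roots $\lambda_1\le\dots\le\lambda_m$ of $p$ and $\mu_1\le\dots\le\mu_{m-1}$ of $q$, we say $q$ interlaces $p$ if $\lambda_i \le \mu_i \le \lambda_{i+1}$ for all $i$. For $p\in\mathcal{T}_n$, $\mathcal{J}(p(x))$ is the set of integer polynomials $q(x)$ of degree $n-1$ with $q\in\mathcal{T}_{n-1}$ and $q$ interlacing $p$. Here $\gcd(p(x),p'(x))$ is the monic gcd and $\mathrm{Min}(p,x) := p(x)/\gcd(p(x),p'(x))$. Writing $\mathrm{Min}(p,x) = \prod_{i=1}^r (x-\lambda_i)$ with $\lambda_1<\dots<\lambda_r$, define $\mathrm{Min}_j(p,x)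 := \prod_{1\le i\le r,\, i\ne j}(x-\lambda_i)$ for $j\in\{1,\dots,r\}$, and $\mathrm{Min}_j(p,x-1)$ is obtained by substituting $x-1$ for $x$. For a nonzero polynomial $g(x)$ of degree $m$, $\mathrm{coeff}(g)\in\mathbb{R}^{m+1}$ is its coefficient vector, whose $i$th entry is the coefficient of $x^{m-i+1}$ in $g(x)$. *)

(* Defs.v *)
From mathcomp Require Import all_boot all_order all_algebra.
From mathcomp Require Import reals.
From mathcomp.real_closed Require Import complex.
Set Implicit Arguments. Unset Strict Implicit. Unset Printing Implicit Defensive.
Import Order.TTheory GRing.Theory Num.Theory.
Local Open Scope ring_scope.

Definition real_rooted (R : rcfType) (p : {poly R}) : Prop :=
  p != 0 /\
  forall z : R[i], root (map_poly (real_complex R) p) z -> Im z = 0.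

Definition polyR (R : rcfType) (p : {poly int}) : {poly R} := map_poly intr p.

(* Seidel trace polynomial of degree n (p = sum_i a_i x^(n-i)) *)
Definition seidel_trace (R : rcfType) (n : nat) (p : {poly int}) : Prop :=
  (1 <= n)%N /\ size p = n.+1 /\
  p`_n = 1 /\
  p`_(n.-1) = 0 /\
  ((2 <= n)%N -> p`_(n - 2) = - ('C(n, 2))%:Z) /\
  real_rooted (polyR R p).

Definition interlaces (R : rcfType) (p q : {poly R}) : Prop :=
  exists (s t : seq R),
    sorted <=%R s /\ sorted <=%R t /\
    size s = (size p).-1 /\ size t = (size s).-1 /\
    p = lead_coef p *: \prod_(x <- s) ('X - x%:P) /\
    q = lead_coef q *: \prod_(x <- t) ('X - x%:P) /\
    (forall i, (i < size t)%N -> s`_i <= t`_i /\ t`_i <= s`_i.+1).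

Definition in_J (R : rcfType) (n : nat) (p q : {poly int}) : Prop :=
  seidel_trace R n.-1 q /\ interlaces (polyR R p) (polyR R q).

Definition mgcdp (R : rcfType) (p q : {poly R}) : {poly R} :=
  (lead_coef (gcdp p q))^-1 *: gcdp p q.

Definition Minp (R : rcfType) (p : {poly R}) : {poly R} :=
  p %/ mgcdp p p^`().

(* Min_j given the strictly increasing list lam of roots of Min(p,x) *)
Definition Minj (R : rcfType) (lam : seq R) (j : nat) : {poly R} :=
  \prod_(i < size lam | i != j :> nat) ('X - (lam`_i)%:P).

Definition shift1 (R : rcfType) (g : {poly R}) : {poly R} := g \Po ('X - 1).

Definition coeffv (R : rcfType) (g : {poly R}) : seq R := rev g.

(* Main.v *)
Require Import Defs.
From mathcomp Require Import all_boot all_order all_algebra.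
From mathcomp Require Import reals.
From mathcomp.real_closed Require Import complex.
From mathcomp Require Import zify ring lra.
Import Order.TTheory GRing.Theory Num.Theory.
Set Implicit Arguments. Unset Strict Implicit. Unset Printing Implicit Defensive.
Local Open Scope ring_scope.

Lemma cnt_ge (R : realDomainType) (a : R) (v : seq R) :
  count (fun x => (a <= x)%R) v = (count (fun x => (a < x)%R) v + count_mem a v)%N.
Proof.
elim: v => //= x v ->; rewrite le_eqVlt (eq_sym x).
case: eqP => [->|_] /=; rewrite ?ltxx /= ?add0n ?addn0 ?addnA ?addSn ?addnS //.
all: lia.


Qed.

Lemma inter_gt (R : realDomainType) (a : R) (s t : seq R) :
  size s = (size t).+1 ->
  (forall i, (i < size t)%N -> s`_i <= t`_i /\ t`_i <= s`_i.+1) ->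
  (count (fun x => (a < x)%R) t <= count (fun x => (a < x)%R) (behead s))%N.
Proof.
elim: t s => // y t IH [|x [|x' s]] //= [Hs] H.
have [_ H2] := H 0%N erefl; rewrite /= in H2.
have := IH (x' :: s) (congr1 S Hs) (fun i hi => H i.+1 hi) => /=.
have : (a < y) ==> (a < x') by apply/implyP => h; exact: lt_le_trans h H2.
by case: (a < y); case: (a < x') => //=; lia.
Qed.

Lemma inter_ge (R : realDomainType) (a : R) (s t : seq R) :
  (forall i, (i < size t)%N -> s`_i <= t`_i /\ t`_i <= s`_i.+1) ->
  (count (fun x => (a <= x)%R) (take (size t) s) <= count (fun x => (a <= x)%R) t)%N.
Proof.
elim: t s => [|y t IH] [|x s] //= H.
have [H1 _] := H 0%N erefl; rewrite /= in H1.
have := IH s (fun i hi => H i.+1 hi).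
have : (a <= x) ==> (a <= y) by apply/implyP => h; exact: le_trans h H1.
by case: (a <= x); case: (a <= y) => //=; lia.
Qed.

Lemma inter_main (R : realDomainType) (a : R) (s t : seq R) :
  size s = (size t).+1 ->
  (forall i, (i < size t)%N -> s`_i <= t`_i /\ t`_i <= s`_i.+1) ->
  (count (fun x => (a < x)%R) t <= count (fun x => (a < x)%R) s)%N /\
  (count (fun x => (a <= x)%R) s <= (count (fun x => (a <= x)%R) t).+1)%N.
Proof.
move=> Hs H; split.
  apply: leq_trans (inter_gt a Hs H) _; case: s Hs {H} => //= x s _; lia.
have := inter_ge a H; rewrite -{2}(cat_take_drop (size t) s) count_cat.
have : (count (fun x => (a <= x)%R) (drop (size t) s) <= 1)%N.
  by apply: leq_trans (count_size _ _) _; rewrite size_drop Hs subSnn.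
lia.
Qed.

Lemma sign_prod (R : realDomainType) (I : Type) (v : seq I) (F : I -> R) :
  all (fun i => F i != 0) v ->
  0 < (-1) ^+ (count (fun i => (F i < 0)%R) v) * \prod_(i <- v) F i.
Proof.
elim: v => [|x v IH]; first by rewrite big_nil /= mulr1.
move=> /= /andP[HFx /IH{}IH].
rewrite big_cons /= exprD mulrACA; apply: mulr_gt0 => //.
case: (boolP (F x < 0)) => h /=; first by rewrite expr1 mulN1r oppr_gt0.
rewrite expr0 mul1r lt_neqAle eq_sym HFx /=.
by rewrite leNgt.
Qed.
Lemma mup_gcd_deriv (R : realFieldType) (P g : {poly R}) (a : R) :
  P != 0 -> g != 0 -> (forall d, (d %| g) = (d %| P) && (d %| P^`())) ->
  mup a g = (mup a P).-1.
Proof.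
move=> P0 g0 Hg.
have [m0 [Q0 HQ0 EP]] := multiplicity_XsubC P a.
rewrite P0 /= in HQ0.
have mP : mup a P = m0 by rewrite EP mupMr // mup_XsubCX eqxx.
have key : forall k, (('X - a%:P) ^+ k %| g) = (k <= m0.-1)%N.
  move=> k; rewrite Hg -mup_geq // mP.
  case: m0 EP mP => [|m] EP mP /=.
    by case: k => [|k] //=; rewrite expr0 dvd1p.
  set S := Q0^`() * ('X - a%:P) + Q0 *+ m.+1.
  have EP' : P^`() = S * ('X - a%:P) ^+ m.
    rewrite EP derivM deriv_exp derivXsubC /S /= mul1r mulrDl exprSr mulrA.
    by rewrite -mulrA (mulrC (_ ^+ m)) mulrA mulrnAr mulrnAl.
  have SNr : ~~ root S a.
    rewrite /root /S !hornerE subrr mulr0 add0r.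
    by rewrite hornerMn -mulr_natr mulf_neq0 // pnatr_eq0.
  have P'0 : P^`() != 0.
    by rewrite EP' mulf_neq0 ?expf_neq0 ?polyXsubC_eq0 //; apply: contraNneq SNr => ->; rewrite root0.
  rewrite -mup_geq // EP' mupMr // mup_XsubCX eqxx.
  by apply/idP/idP => [/andP[]//|h]; rewrite h andbT (leq_trans h).
apply/eqP; rewrite mP eqn_leq; apply/andP; split.
  by rewrite -key -mup_geq.
by rewrite mup_geq // key.
Qed.
Lemma sub_perm (T : eqType) (u t : seq T) :
  (forall a, count_mem a u <= count_mem a t)%N -> exists w, perm_eq t (u ++ w).
Proof.
elim: u t => [|x u IH] t H; first by exists t.
have xt : x \in t by rewrite -has_pred1 has_count; apply: leq_trans (H x); rewrite /= eqxx.
have Pt := perm_to_rem xt.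
have [|w Hw] := IH (rem x t).
  move=> a; have := H a; rewrite (permP Pt) /=; lia.
by exists w; apply: (perm_trans Pt); rewrite /= perm_cons.
Qed.

Lemma MinjE (R : rcfType) (lam : seq R) j :
  Minj lam j = \prod_(i <- [seq i <- iota 0 (size lam) | i != j]) ('X - (lam`_i)%:P).
Proof. by rewrite /Minj -(big_mkord (fun i => i != j) (fun i => 'X - (lam`_i)%:P)) big_filter /index_iota subn0. Qed.

Lemma size_Minj (R : rcfType) (lam : seq R) j :
  (j < size lam)%N -> size (Minj lam j) = size lam.
Proof.
move=> hj; rewrite MinjE size_prod_XsubC size_filter.
have := count_predC (fun i => i == j) (iota 0 (size lam)).
rewrite count_uniq_mem ?iota_uniq // mem_iota hj size_iota /=.
case: (size lam) hj => // r _; rewrite add1n => [[<-]].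
Qed.

Lemma Minj_other (R : rcfType) (lam : seq R) i j :
  i != j -> (i < size lam)%N -> (Minj lam j).[lam`_i] = 0.
Proof.
move=> hij hi; rewrite MinjE horner_prod (bigD1_seq i) /=.
- by rewrite hornerXsubC subrr mul0r.
- by rewrite mem_filter hij mem_iota.
- by rewrite filter_uniq ?iota_uniq.
Qed.

Lemma Minj_self (R : rcfType) (lam : seq R) j :
  uniq lam -> (j < size lam)%N -> (Minj lam j).[lam`_j] != 0.
Proof.
move=> U hj; rewrite MinjE horner_prod prodf_seq_neq0.
apply/allP => i; rewrite mem_filter mem_iota /= => /andP[hij hi].
by rewrite hornerXsubC subr_eq0 nth_uniq // eq_sym.
Qed.



Lemma Minj_sign (R : rcfType) (lam : seq R) j :
  uniq lam -> (j < size lam)%N ->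
  0 < (-1) ^+ (count (fun x => (lam`_j < x)%R) lam) * (Minj lam j).[lam`_j].
Proof.
move=> U hj; rewrite MinjE horner_prod.
under eq_bigr do rewrite hornerXsubC.
have := @sign_prod R _ [seq i <- iota 0 (size lam) | i != j] (fun i => lam`_j - lam`_i).
have -> : count (fun x => (lam`_j < x)%R) lam =
   count (fun i => (lam`_j - lam`_i < 0)%R) [seq i <- iota 0 (size lam) | i != j].
  rewrite count_filter.
  transitivity (count (fun x => (lam`_j < x)%R) (map (nth 0 lam) (iota 0 (size lam)))).
    by rewrite -/(mkseq _ _) mkseq_nth.
  rewrite count_map.
  apply: eq_count => i /=; rewrite subr_lt0.
  by case: eqP => [->|]; rewrite ?ltxx ?andbT.
apply; apply/allP => i; rewrite mem_filter mem_iota /= => /andP[hij hi].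
by rewrite subr_eq0 nth_uniq // eq_sym.
Qed.

Lemma lagrange (R : rcfType) (lam : seq R) (f : {poly R}) :
  uniq lam -> (size f <= size lam)%N ->
  f = \sum_(j < size lam) (f.[lam`_j] / (Minj lam j).[lam`_j]) *: Minj lam j.
Proof.
move=> U hf; apply/eqP; rewrite -subr_eq0; apply/negPn/negP => D0.
have Hs : (size (f - \sum_(j < size lam) (f.[lam`_j] / (Minj lam j).[lam`_j]) *: Minj lam j)%R <= size lam)%N.
  rewrite (leq_trans (size_polyD _ _)) // size_polyN geq_max hf /=.
  apply: (big_ind (fun p : {poly R} => size p <= size lam)%N) => //.
  - by rewrite size_poly0.
  - by move=> p q hp hq; rewrite (leq_trans (size_polyD _ _)) // geq_max hp.
  - move=> i _; rewrite (leq_trans (size_scale_leq _ _)) // size_Minj //.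
have Hall : all (root (f - \sum_(j < size lam) (f.[lam`_j] / (Minj lam j).[lam`_j]) *: Minj lam j)) lam.
  apply/allP => x /(nthP 0) [k hk <-].
  rewrite /root hornerD hornerN horner_sum (bigD1 (Ordinal hk)) //= hornerZ.
  rewrite divfK ?Minj_self // big1 ?addr0 ?subrr // => i hi.
  rewrite hornerZ (@Minj_other _ lam k i) ?mulr0 //.
  by apply: contra hi => /eqP h; apply/eqP; apply: val_inj.
by have := max_poly_roots D0 Hall U; rewrite ltnNge Hs.
Qed.

Lemma int_quot (R : rcfType) (p q : {poly int}) (g : {poly R}) :
  lead_coef q = 1 ->
  g = mgcdp (polyR R p) (polyR R p)^`() ->
  g %| polyR R q -> lead_coef (polyR R q %/ g) = 1 ->
  exists f0 : {poly int}, polyR R q %/ g = polyR R f0.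
Proof.
move=> lq Eg' gd lf.
have polyRE r : polyR R r = map_poly ratr (map_poly intr r : {poly rat}).
  by rewrite /polyR -map_poly_comp; apply: eq_map_poly => x /=; rewrite ratr_int.
set PQ := map_poly intr p : {poly rat}.
set QQ := map_poly intr q : {poly rat}.
set gQ := (lead_coef (gcdp PQ PQ^`()))^-1 *: gcdp PQ PQ^`().
have Eg : g = map_poly ratr gQ.
  rewrite Eg' /mgcdp polyRE deriv_map -gcdp_map lead_coef_map -fmorphV -map_polyZ.
  done.
have Ef : polyR R q %/ g = map_poly ratr (QQ %/ gQ) by rewrite map_divp -Eg -polyRE.
have gQd : gQ %| QQ by rewrite -(dvdp_map (@ratr R)) -Eg -polyRE.
have lfQ : lead_coef (QQ %/ gQ) = 1.
  apply: (fmorph_inj (@ratr R)); rewrite rmorph1 -lead_coef_map -Ef //.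
have fd : (QQ %/ gQ) %| QQ by rewrite -{2}(divpK gQd) dvdp_mulr.
have [p1 [a a0 Efa] [r0 Eq]] := dvdpP_rat_int fd.
have le : lead_coef r0 * lead_coef p1 = 1 by rewrite mulrC -lead_coefM -Eq.
have := intUnitRing.unitzPl le.
set e := lead_coef p1.
have lfe : a * e%:~R = 1.
  rewrite -[RHS]lfQ Efa lead_coefZ lead_coef_map_inj //; exact: intr_inj.
move=> eu; have ee : e * e = 1.
  by move: eu; rewrite /intUnitRing.unitz qualifE /= => /orP[]/eqP->.
have ae : a = e%:~R.
  have h : (e%:~R * e%:~R : rat) = 1 by rewrite -intrM ee.
  transitivity (a * (e%:~R * e%:~R)); first by rewrite h mulr1.
  by rewrite mulrA lfe mul1r.
exists (e *: p1); rewrite Ef Efa ae polyRE; congr (map_poly _ _).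
by rewrite map_polyZ.
Qed.

Lemma inter_cnt (R : realDomainType) (a : R) (s t : seq R) :
  size s = (size t).+1 ->
  (forall i, (i < size t)%N -> s`_i <= t`_i /\ t`_i <= s`_i.+1) ->
  (count_mem a s <= (count_mem a t).+1)%N.
Proof.
move=> Hs H; have [h1 h2] := inter_main a Hs H; move: h1 h2; rewrite !cnt_ge; lia.
Qed.

Lemma inter_eq (R : realDomainType) (a : R) (s t : seq R) :
  size s = (size t).+1 ->
  (forall i, (i < size t)%N -> s`_i <= t`_i /\ t`_i <= s`_i.+1) ->
  (count_mem a t).+1 = count_mem a s ->
  count (fun x => (a < x)%R) t = count (fun x => (a < x)%R) s.
Proof.
move=> Hs H E; have [h1 h2] := inter_main a Hs H; move: h1 h2; rewrite !cnt_ge -E; lia.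
Qed.

Lemma shift1_sum (R : rcfType) (I : Type) (rr : seq I) (F : I -> {poly R}) (c : I -> R) :
  shift1 (\sum_(i <- rr) c i *: F i) = \sum_(i <- rr) c i *: shift1 (F i).
Proof.
rewrite /shift1; elim/big_rec2: _ => [|j y1 y2 _ <-]; first by rewrite comp_poly0.
by rewrite comp_polyD comp_polyZ.
Qed.

Lemma size_shift1 (R : rcfType) (h : {poly R}) : size (shift1 h) = size h.
Proof. by rewrite /shift1 size_comp_poly2 // -polyC1 size_XsubC. Qed.

Unset Implicit Arguments. Set Strict Implicit.

Theorem theorem4p4 (R : realType) (n : nat) (p q : {poly int}) (lam : seq R) :
  (2 <= n)%N ->
  seidel_trace R n p ->
  in_J R n p q ->
  sorted <%R lam ->
  Minp (polyR R p) = \prod_(x <- lam) ('X - x%:P) ->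
  let r := size lam in
  let g := mgcdp (polyR R p) (polyR R p)^`() in
  let f := polyR R q %/ g in
  [/\ g %| polyR R q,
      (exists f0 : {poly int}, f = polyR R f0)
    & exists gamma : nat -> R,
        (forall j, (j < r)%N -> 0 <= gamma j) /\
        coeffv (shift1 f) =
          [seq \sum_(j < r) gamma j * (coeffv (shift1 (Minj lam j)))`_i
          | i <- iota 0 r] ].
Proof.
move=> n2 [_ [szp [pn [_ [_ _]]]]] [[_ [szq [qn _]]] [s [t [ss [st [szs [szt [Ep [Eq Hint]]]]]]]]] slam EM r g f.
set P := polyR R p in Ep EM g f *.
set Q := polyR R q in Eq f *.
have sizeP : size P = n.+1 by rewrite size_map_inj_poly //; apply: intr_inj.
have lP : lead_coef P = 1.
  by rewrite lead_coef_map_inj //; [rewrite /lead_coef szp /= pn | apply: intr_inj].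
have lq : lead_coef q = 1 by rewrite /lead_coef szq /= qn.
have lQ : lead_coef Q = 1 by rewrite lead_coef_map_inj // ?lq //; apply: intr_inj.
have HP : P = \prod_(x <- s) ('X - x%:P) by rewrite {1}Ep lP scale1r.
have HQ : Q = \prod_(x <- t) ('X - x%:P) by rewrite {1}Eq lQ scale1r.
have szs' : size s = n by rewrite szs sizeP.
have szt' : size t = n.-1 by rewrite szt szs'.
have P0 : P != 0 by rewrite HP monic_neq0 // monic_prod_XsubC.
have G0 : gcdp P P^`() != 0 by rewrite gcdp_eq0 negb_and P0.
have lG0 : lead_coef (gcdp P P^`()) != 0 by rewrite lead_coef_eq0.
have gE : g = (lead_coef (gcdp P P^`()))^-1 *: gcdp P P^`() by [].
have g0 : g != 0 by rewrite gE scaler_eq0 invr_eq0 negb_or lG0 G0.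
have gmon : g \is monic by rewrite monicE gE lead_coefZ mulVf.
have Hg d : (d %| g) = (d %| P) && (d %| P^`()) by rewrite gE dvdpZr ?invr_eq0 // dvdp_gcd.
have gP : g %| P by have := Hg g; rewrite dvdpp => /esym/andP[].
have mupg a : mup a g = (count_mem a s).-1 by rewrite (mup_gcd_deriv a P0 g0 Hg) HP mu_prod_XsubC.
move: (gP); rewrite {1}HP => gP'.
have [m Hm] := @dvdp_prod_XsubC _ _ s id g gP'.
set u := mask m s in Hm.
have gu : g = \prod_(x <- u) ('X - x%:P) by apply/eqP; rewrite -eqp_monic ?monic_prod_XsubC.
have cu a : count_mem a u = (count_mem a s).-1 by rewrite -mu_prod_XsubC -gu mupg.
have PM : P = \prod_(x <- lam) ('X - x%:P) * g by rewrite -EM /Minp divpK.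
have perm_s : perm_eq s (lam ++ u) by apply: prod_XsubC_eq; rewrite big_cat /= -gu -PM -HP.
have Hst : size s = (size t).+1 by rewrite szt' szs' prednK // ltnW.
have ineq a : (count_mem a s <= (count_mem a t).+1)%N.
  exact: (inter_cnt a Hst Hint).
have [w Hw] : exists w, perm_eq t (u ++ w).
  by apply: sub_perm => a; rewrite cu; move: (ineq a) => h; clear -h; lia.
have QE : Q = g * \prod_(x <- w) ('X - x%:P) by rewrite HQ gu -big_cat; apply: perm_big.
have fE : f = \prod_(x <- w) ('X - x%:P) by rewrite /f QE mulrC mulpK.
have sz1 := perm_size perm_s; have sz2 := perm_size Hw.
rewrite size_cat in sz1; rewrite size_cat in sz2.
have szf : size f = r.
  rewrite fE size_prod_XsubC /r; move: sz1 sz2; rewrite szs' szt'.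
  move: (size w) (size u) (size lam) => a b c; clear -n2; lia.
have U : uniq lam := lt_sorted_uniq slam.
split.
- by rewrite QE dvdp_mulr.
- apply: (int_quot lq erefl); first by rewrite -/Q QE dvdp_mulr.
  by rewrite -/f fE; apply/monicP; rewrite monic_prod_XsubC.
exists (fun j => f.[lam`_j] / (Minj lam j).[lam`_j]); split.
  move=> j hj /=.
  have HM := Minj_sign U hj.
  have M0 := Minj_self U hj.
  set a := lam`_j in HM M0 *.
  have aL : a \in lam by apply: mem_nth.
  have cl : count_mem a lam = 1%N by rewrite count_uniq_mem // aL.
  have [aw|aw] := boolP (a \in w).
    have -> : f.[a] = 0 by apply/rootP; rewrite fE root_prod_XsubC.
    by rewrite mul0r.
  have cw : count_mem a w = 0%N by apply/count_memPn.
  have E : (count_mem a t).+1 = count_mem a s.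
    by rewrite (permP perm_s) (permP Hw) !count_cat cw cl addn0 add1n.
  have Eg := inter_eq Hst Hint E.
  have kw : count (fun x => (a < x)%R) w = count (fun x => (a < x)%R) lam.
    move: Eg; rewrite (permP perm_s) (permP Hw) !count_cat addnC => /eqP.
    by rewrite eqn_add2r => /eqP.
  have HF : 0 < (-1) ^+ (count (fun x => (a < x)%R) lam) * f.[a].
    rewrite fE horner_prod -kw.
    under eq_bigr do rewrite hornerXsubC.
    have -> : count (fun x => (a < x)%R) w = count (fun x => (a - x < 0)%R) w.
      by apply: eq_count => x /=; rewrite subr_lt0.
    apply: sign_prod; apply/allP => x xw /=; rewrite subr_eq0.
    by apply: contraNneq aw => ->.
  have := mulr_gt0 HF HM; rewrite mulrACA.
  rewrite -expr2 -exprM mulnC exprM sqrrN !expr1n mul1r => fM.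
  rewrite (_ : f.[a] / _ = (f.[a] * (Minj lam j).[a]) / ((Minj lam j).[a] ^+ 2)).
    by apply: divr_ge0; [exact: ltW | exact: sqr_ge0].
  by rewrite expr2 invfM mulrA mulfK.
have LF : f = \sum_(j < r) (f.[lam`_j] / (Minj lam j).[lam`_j]) *: Minj lam j.
  by apply: lagrange => //; rewrite szf.
have szS h : size (shift1 h) = size h by apply: size_shift1.
have SF : shift1 f = \sum_(j < r) (f.[lam`_j] / (Minj lam j).[lam`_j]) *: shift1 (Minj lam j).
  by rewrite {1}LF shift1_sum.
rewrite /coeffv -{1}(mkseq_nth 0 (rev (shift1 f))) size_rev szS szf /mkseq.
apply/eq_in_map => i; rewrite mem_iota add0n => /andP[_ hi].
rewrite nth_rev ?szS ?szf // SF coef_sum; apply: eq_bigr => j _.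
by rewrite coefZ nth_rev ?szS ?size_Minj.
Qed.
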